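(* For every $\alpha\in(0,1]$ and every $P\in\mathcal{P}$, the set $P^\alpha$ is compact in $\mathcal{P}$ for the weak topology.
   Context: $\mathcal{P}$ denotes the set of all probability measures on $(\mathbb{R}^d,\mathcal{B}_d)$, $\mathcal{B}_d$ the Borel $\sigma$-algebra, endowed with the topology of weak convergence. For $P\in\mathcal{P}$ and $\alpha\in(0,1]$, the $\alpha$-trimming of $P$ is $P^\alpha=\{Q\in\mathcal{P} : Q(B)\le \alpha^{-1}P(B)\text{ for all } B\in\mathcal{B}_d\}$. *)

(* Defs.v *)
From HB Require Import structures.
From mathcomp Require Import all_boot all_order all_algebra.
From mathcomp Require Import all_classical all_reals all_analysis.

Set Implicit Arguments.
Unset Strict Implicit.
Unset Printing Implicit Defensive.
Import Order.TTheory GRing.Theory Num.Theory.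
Import numFieldNormedType.Exports.
Local Open Scope classical_set_scope.
Local Open Scope ring_scope.

Definition Rd (R : realType) (d : nat) :=
  g_sigma_algebraType (@open 'M[R]_(1, d)).

Definition prob (R : realType) (d : nat) := probability (Rd R d) R.

HB.instance Definition _ (R : realType) (d : nat) :=
  gen_eqMixin (prob R d).
HB.instance Definition _ (R : realType) (d : nat) :=
  gen_choiceMixin (prob R d).

Definition bcf (R : realType) (d : nat) :=
  {f : 'M[R]_(1, d) -> R | continuous f /\ exists M : R, forall x, `|f x| <= M}.

Definition weak_eval (R : realType) (d : nat) (Q : prob R d)
  : {ptws bcf R d -> R} :=
  fun f => fine (\int[Q]_(x in [set: Rd R d]) ((proj1_sig f) x)%:E).

(* P with the topology of weak convergence: the coarsest topology making
   every Q |-> \int f dQ (f bounded continuous) continuous. *)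
Definition weak_prob (R : realType) (d : nat) :=
  initial_topology (@weak_eval R d).

Definition trimming (R : realType) (d : nat) (alpha : R) (P : prob R d)
  : set (prob R d) :=
  [set Q : prob R d | forall B : set (Rd R d), measurable B ->
     (Q B <= (alpha^-1)%:E * P B)%E].

(* Main.v *)
Require Import Defs.
From HB Require Import structures.
From mathcomp Require Import all_boot all_order all_algebra.
From mathcomp Require Import all_classical all_reals all_analysis.
Import Order.TTheory GRing.Theory Num.Theory.
Import numFieldNormedType.Exports.
Local Open Scope classical_set_scope.
Local Open Scope ring_scope.
From mathcomp Require Import measurable_realfun lra.
Lemma initial_cvg_back {S : choiceType} {T : topologicalType} (f : S -> T)
  (F : set_system S) (s : S) : Filter F -> f @ F --> f s ->
  F --> (s : initial_topology f).
Proof.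
move=> FF cv A; rewrite nbhsE => -[W [[B Bop <-] Bfs] WA].
apply: filterS WA _; apply: cv; exact: open_nbhs_nbhs.
Qed.

Lemma ptws_cvg_back {U : Type} {V : topologicalType} (F : set_system {ptws U -> V})
  (g : {ptws U -> V}) : Filter F ->
  (forall t, (fun h => h t) @ F --> g t) -> F --> g.
Proof.
move=> FF cv.
have : F --> (g : product_topology_def (fun _ : U => V)).
  apply/cvg_sup => t; apply: initial_cvg_back; exact: cv.
by [].
Qed.

Lemma fmap_ultra {T U : Type} (f : T -> U) (F : set_system T) :
  UltraFilter F -> UltraFilter (f @ F).
Proof.
move=> FU; split; first exact: fmap_proper_filter.
move=> G GP sFG; rewrite predeqE => A; split; last exact: sFG.
move=> GA; have [//|FnA] := in_ultra_setVsetC (f @^-1` A) FU.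
have : G (~` A) by apply: sFG; rewrite /= nbhs_simpl; exact: FnA.
by move=> GnA; exfalso; apply: (filter_not_empty G); rewrite -(setICr A); exact: filterI.
Qed.
Set Implicit Arguments.
Unset Strict Implicit.
Section ulim.
Context (R : realType) (d : nat) (U : set_system (prob R d)) (UU : UltraFilter U).

Definition gB (B : set (Rd R d)) (Q : prob R d) : R := fine (Q B).
Definition lB (B : set (Rd R d)) : R := lim (gB B @ U).

Lemma gB01 B (Q : prob R d) : measurable B -> 0 <= gB B Q <= 1.
Proof.
move=> mB; rewrite /gB fine_ge0 ?measure_ge0 //=.
have := probability_le1 Q mB.
have := fin_num_measure Q B mB.
by case: (Q B) => //= r _; rewrite lee_fin.
Qed.

Lemma gB_cvg {B} : measurable B -> gB B @ U --> lB B /\ 0 <= lB B <= 1.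
Proof.
move=> mB.
have cpt := @segment_compact R 0 1.
rewrite compact_ultra in cpt.
have [|p [p01 cvp]] := cpt (gB B @ U) (@fmap_ultra _ _ (gB B) U UU).
  rewrite /= nbhs_simpl; apply: nearW => Q /=.
  by rewrite in_itv /=; exact: gB01.
have -> : lB B = p by apply: cvg_lim.
by split => //; move: p01; rewrite /= in_itv.
Qed.


Lemma gBU A B (Q : prob R d) : measurable A -> measurable B -> A `&` B = set0 ->
  gB (A `|` B) Q = gB A Q + gB B Q.
Proof.
move=> mA mB AB; rewrite /gB measureU // fineD //; exact: fin_num_measure.
Qed.

Lemma lBU A B : measurable A -> measurable B -> A `&` B = set0 ->
  lB (A `|` B) = lB A + lB B.
Proof.
move=> mA mB AB; have [cA _] := gB_cvg mA; have [cB _] := gB_cvg mB.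
rewrite {1}/lB; apply: cvg_lim; first exact: Rhausdorff.
have -> : gB (A `|` B) = (fun Q => gB A Q + gB B Q).
  by apply/funext => Q; exact: gBU.
exact: cvgD.
Qed.

Lemma lB0 : lB set0 = 0.
Proof.
rewrite /lB; apply: cvg_lim; first exact: Rhausdorff.
apply: cvg_near_cst; apply: nearW => Q.
by rewrite /gB measure0.
Qed.

Lemma lBT : lB setT = 1.
Proof.
rewrite /lB; apply: cvg_lim; first exact: Rhausdorff.
apply: cvg_near_cst; apply: nearW => Q.
by rewrite /gB probability_setT.
Qed.

Lemma lB_bigU (F : nat -> set (Rd R d)) n :
  (forall i, measurable (F i)) -> trivIset setT F ->
  lB (\big[setU/set0]_(i < n) F i) = \sum_(i < n) lB (F i).
Proof.
move=> mF tF; elim: n => [|n IH]; first by rewrite !big_ord0 lB0.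
rewrite !big_ord_recr /= lBU ?IH //.
- exact: bigsetU_measurable.
- have := @trivIset_bigsetUI _ predT F _ n n erefl (leqnn n).
  by rewrite big_mkcond /=; apply; rewrite /trivIset in tF *; move=> i j _ _; apply: tF.
Qed.

Section trim.
Context (alpha : R) (P : prob R d) (a0 : 0 < alpha) (UT : U (trimming alpha P)).

Lemma lB_leP B : measurable B -> lB B <= alpha^-1 * fine (P B).
Proof.
move=> mB; have [cB _] := gB_cvg mB.
suff : [set x | x <= alpha^-1 * fine (P B)] (lB B) by [].
apply: (@closed_cvg _ _ U _ (gB B) [set x | x <= alpha^-1 * fine (P B)] (@closed_le R (alpha^-1 * fine (P B))) _ (lB B) cB).
apply: filterS UT => Q QT; have := QT B mB.
have fQ := fin_num_measure Q B mB; have fP := fin_num_measure P B mB.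
rewrite /gB /= -lee_fin EFinM !fineK // fin_numM // fin_num_measure.
Qed.


Lemma gP_diff {A B} : measurable A -> measurable B -> A `<=` B ->
  fine (P B) = fine (P A) + fine (P (B `\` A)).
Proof.
move=> mA mB AB; rewrite -{1}(setDUK AB) measureU ?fineD //.
- exact: fin_num_measure.
- by apply: fin_num_measure; exact: measurableD.
- exact: measurableD.
- exact: setDIK.
Qed.

Lemma lB_diff {A B} : measurable A -> measurable B -> A `<=` B ->
  0 <= lB B - lB A <= alpha^-1 * (fine (P B) - fine (P A)).
Proof.
move=> mA mB AB.
have mD : measurable (B `\` A) by exact: measurableD.
have -> : lB B - lB A = lB (B `\` A).
  by rewrite -{1}(setDUK AB) lBU // ?setDIK // addrC addKr.
rewrite (gP_diff mA mB AB) [_ + _ - _]addrC addKr.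
have [_ /andP [-> _]] := gB_cvg mD.
rewrite /=; exact: lB_leP.
Qed.

Lemma lB_nd_cvg (G : nat -> set (Rd R d)) : (forall n, measurable (G n)) ->
  measurable (\bigcup_n G n) -> nondecreasing_seq G ->
  (fun n => lB (G n)) @ \oo --> lB (\bigcup_n G n).
Proof.
move=> mG mU nd.
have cP := nondecreasing_cvg_mu (mu := P) mG mU nd.
have cPf : (fun n => fine (P (G n))) @ \oo --> fine (P (\bigcup_n G n)).
  apply: (fine_cvg (f := P \o G)); rewrite fineK //; exact: fin_num_measure.
apply: (proj2 (cvgrPdist_le _ _)) => e e0.
move/cvgrPdist_le: cPf => /(_ (alpha * e) (mulr_gt0 a0 e0)) HP.
near=> n.
have Hn : `|fine (P (\bigcup_n G n)) - fine (P (G n))| <= alpha * e by near: n.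
have sub : G n `<=` \bigcup_n G n by exact: bigcup_sup.
have /andP [h1 h2] := lB_diff (mG n) mU sub.
rewrite ger0_norm //; apply: le_trans h2 _.
rewrite -(ler_pM2l a0) mulrA mulfV ?gt_eqF // mul1r.
exact: le_trans (ler_norm _) Hn.
Unshelve. all: by end_near.
Qed.

End trim.
End ulim.
Set Implicit Arguments.
Unset Strict Implicit.
Section mu_u.
Context (R : realType) (d : nat) (U : set_system (prob R d)) (UU : UltraFilter U)
  (alpha : R) (P : prob R d) (a0 : 0 < alpha) (UT : U (trimming alpha P)).

Definition mu_u (B : set (Rd R d)) : \bar R := (`|lB U B|)%:E.

Lemma mu_u0 : mu_u set0 = 0%E.
Proof. by rewrite /mu_u (lB0 UU) normr0. Qed.

Lemma mu_u_ge0 B : (0 <= mu_u B)%E.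
Proof. by rewrite /mu_u lee_fin. Qed.

Lemma lB_ge0 B : measurable B -> 0 <= lB U B.
Proof. by move=> mB; have [_ /andP []] := gB_cvg UU mB. Qed.

Lemma bigcup_bigsetU_ord (F : nat -> set (Rd R d)) :
  \bigcup_n (\big[setU/set0]_(i < n) F i) = \bigcup_n F n.
Proof.
apply/seteqP; split => x.
  by move=> [n _]; rewrite -bigcup_mkord => -[i /= _ Fix]; exists i.
move=> [n _ Fnx]; exists n.+1 => //; rewrite -bigcup_mkord; exists n => //=.
Qed.

Lemma mu_u_sigma : semi_sigma_additive mu_u.
Proof.
move=> F mF tF mUF.
have eq n : (\sum_(0 <= i < n) mu_u (F i))%E
    = (lB U (\big[setU/set0]_(i < n) F i))%:E.
  rewrite big_mkord (lB_bigU UU) // -sumEFin; apply: eq_bigr => i _.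
  by rewrite /mu_u ger0_norm // lB_ge0.
under eq_fun do rewrite eq.
rewrite /mu_u ger0_norm; last exact: lB_ge0.
apply: cvg_EFin; first exact: nearW.
rewrite -bigcup_bigsetU_ord.
apply: (lB_nd_cvg UU a0 UT).
- by move=> n; exact: bigsetU_measurable.
- by rewrite bigcup_bigsetU_ord.
- move=> m n mn; apply/subsetPset => x; rewrite -!bigcup_mkord => -[i /= im Fix]; exists i => //=.
  exact: leq_trans im mn.
Qed.

Lemma mu_uT : mu_u setT = 1%E.
Proof. by rewrite /mu_u (lBT UU) normr1. Qed.

HB.instance Definition _ := isMeasure.Build _ (Rd R d) R mu_u mu_u0 mu_u_ge0 mu_u_sigma.
HB.instance Definition _ := Measure_isProbability.Build _ (Rd R d) R mu_u mu_uT.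

Definition mu_p : prob R d := mu_u.

Lemma mu_p_trim : trimming alpha P mu_p.
Proof.
move=> B mB; rewrite /mu_p /= /mu_u ger0_norm; last exact: lB_ge0.
rewrite -(fineK (fin_num_measure P B mB)) -EFinM lee_fin.
exact: lB_leP.
Qed.

Lemma mu_p_fine B : measurable B -> fine (mu_p B) = lB U B.
Proof. by move=> mB; rewrite /mu_p /= /mu_u /= ger0_norm //; exact: lB_ge0. Qed.

End mu_u.
Set Implicit Arguments.
Unset Strict Implicit.
Section approx.
Context (R : realType) (d : nat).

Lemma bdd_integrable (Q : prob R d) (f : Rd R d -> R) (M : R) :
  measurable_fun setT f -> (forall x, `|f x| <= M) ->
  Q.-integrable setT (EFin \o f).
Proof.
move=> mf fM; apply: measurable_bounded_integrable => //.
- by apply: (le_lt_trans (probability_le1 Q measurableT)); rewrite ltry.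
- exists M; split; first exact: num_real.
  by move=> y My x _ /=; apply: le_trans (fM x) (ltW My).
Qed.

Lemma Rint_simple (Q : prob R d) (c : nat -> R) (B : nat -> set (Rd R d)) N :
  (forall k, measurable (B k)) ->
  Q.-integrable setT (EFin \o (fun x => \sum_(k < N) c k * \1_(B k) x)) /\
  \int[Q]_x (\sum_(k < N) c k * \1_(B k) x) = \sum_(k < N) c k * fine (Q (B k)).
Proof.
move=> mB; elim: N => [|N [iN IH]].
  split.
    apply: (@bdd_integrable _ _ 0) => [|x]; last by rewrite big_ord0 normr0.
    by under eq_fun do rewrite big_ord0; exact: measurable_cst.
  rewrite big_ord0 (eq_Rintegral _ (g := fun _ => 0)); last by move=> x _; rewrite big_ord0.
  by rewrite Rintegral_cst // mul0r.
have iT : Q.-integrable setT (EFin \o (fun x => c N * \1_(B N) x)).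
  have := integrableZl measurableT (c N) (integrable_indic Q (mB N)).
  by apply: eq_integrable => // x _.
split.
  under eq_fun do rewrite big_ord_recr /=.
  exact: (integrableD measurableT iN iT).
rewrite (eq_Rintegral _ (g := fun x => \sum_(k < N) c k * \1_(B k) x + c N * \1_(B N) x));
  last by move=> x _; rewrite big_ord_recr.
rewrite RintegralD // IH big_ord_recr /= RintegralZl //; last first.
  by apply: eq_integrable (integrable_indic Q (mB N)) => // x _.
by rewrite /Rintegral integral_indic // setIT.
Qed.


Definition hn (n : nat) : R := n%:R^-1.
Definition cK (M : R) n k : R := - M + k%:R * hn n.
Definition NK (M : R) n : nat := (Num.truncn (2 * M * n%:R)).+1.
Definition BK (f : Rd R d -> R) (M : R) n k : set (Rd R d) :=
  f @^-1` `[cK M n k, cK M n k + hn n[%classic.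
Definition sK f M n x := \sum_(k < NK M n) cK M n k * \1_(BK f M n k) x.

Lemma BK_meas f M n k : measurable_fun setT f -> measurable (BK f M n k).
Proof. by move=> mf; rewrite /BK -[_ @^-1` _]setTI; apply: mf. Qed.

Lemma cK_le (M z : R) n m : (0 < n)%N ->
  (cK M n m <= z) = (m%:R <= (z + M) * n%:R).
Proof.
by move=> n0; rewrite /cK /hn addrC lerBlDr -ler_pdivlMr ?invr_gt0 ?ltr0n // ?invrK.
Qed.

Lemma cK_lt (M z : R) n m : (0 < n)%N ->
  (z < cK M n m) = ((z + M) * n%:R < m%:R).
Proof.
by move=> n0; rewrite /cK /hn addrC ltrBrDr -ltr_pdivlMr ?invr_gt0 ?ltr0n // ?invrK.
Qed.

Lemma cKS M n k : cK M n k + hn n = cK M n k.+1.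
Proof. by rewrite /cK -natr1 mulrDl mul1r addrA. Qed.

Lemma sK_spec f M n x : (0 < n)%N -> `|f x| < M ->
  sK f M n x <= f x < sK f M n x + hn n.
Proof.
move=> n0 fM.
set y := (f x + M) * n%:R.
have fxM : - M < f x /\ f x < M.
  by split; [rewrite ltrNl; apply: le_lt_trans fM; rewrite -normrN ler_norm|apply: le_lt_trans fM; exact: ler_norm].
have y0 : 0 <= y by rewrite mulr_ge0 // -lerBlDr sub0r ltW //; case: fxM.
set k := Num.truncn y.
have kN : (k < NK M n)%N.
  rewrite /NK ltnS; apply: le_truncn; rewrite /y ler_pM2r ?ltr0n //.
  by rewrite mulr_natl mulr2n lerD2r ltW //; case: fxM.
have eqk (j : nat) : \1_(BK f M n j) x = (k == j)%:R :> R.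
  rewrite indicE /BK; suff -> : (x \in f @^-1` `[cK M n j, cK M n j + hn n[) = (k == j) by [].
  apply/idP/idP.
    rewrite inE /= in_itv /= cKS => /andP [h1 h2].
    by rewrite /k truncn_eq // -cK_le // -cK_lt // h1 h2.
  rewrite /k truncn_eq // => /andP [h1 h2].
  by rewrite inE /= in_itv /= cKS cK_le // cK_lt // h1 h2.
have -> : sK f M n x = cK M n k.
  rewrite /sK (bigD1 (Ordinal kN)) //= eqk eqxx mulr1 big1 ?addr0 //.
  move=> j /eqP jk; rewrite eqk; case: eqP => [kj|]; last by rewrite mulr0.
  by exfalso; apply: jk; apply: val_inj => /=; rewrite -kj.
have := truncn_itv y0; rewrite -/k => /andP [h1 h2].
by rewrite cKS cK_le // cK_lt // h1 h2.
Qed.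


Lemma int_approx (Q : prob R d) (f : Rd R d -> R) (M : R) (n : nat) : measurable_fun setT f ->
  (forall x, `|f x| < M) -> (0 < n)%N ->
  `|\int[Q]_x f x - \sum_(k < NK M n) cK M n k * fine (Q (BK f M n k))| <= hn n.
Proof.
move=> mf fM n0.
have mB : forall k, measurable (BK f M n k) by move=> k; exact: BK_meas.
have [iS eS] := @Rint_simple Q (cK M n) (BK f M n) (NK M n) mB.
have iF : Q.-integrable setT (EFin \o f) := @bdd_integrable Q f M mf (fun x => ltW (fM x)).
have sp x := @sK_spec f M n x n0 (fM x).
rewrite -eS -RintegralB //.
rewrite ger0_norm; last first.
  apply: Rintegral_ge0 => x _; rewrite subr_ge0.
  by have /andP [] := sp x.
apply: (@le_trans _ _ (\int[Q]_(x in setT) hn n)).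
  apply: le_Rintegral => //.
  - by have := integrableB measurableT iF iS; apply: eq_integrable => // x _.
  - apply: (@bdd_integrable Q _ (hn n)); first exact: measurable_cst.
    by move=> x; rewrite ger0_norm // /hn invr_ge0.
  - move=> x _; rewrite lerBlDl; apply: ltW.
    by have /andP [] := sp x.
rewrite Rintegral_cst // (_ : fine _ = 1) ?mulr1 //.
exact: (congr1 fine (probability_setT Q)).
Qed.

End approx.
Set Implicit Arguments.
Unset Strict Implicit.

Lemma bcf_meas (R : realType) (d : nat) (f : bcf R d) :
  measurable_fun setT (sval f : Rd R d -> R).
Proof.
have [cf _] := svalP f.
apply: (measurability _ (RGenOpens.measurableE R)).
move=> _ [_ [a [b ->]] <-]; apply: sub_sigma_algebra; rewrite setTI.
by apply: (proj1 (continuousP _) cf); exact: interval_open.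
Qed.

Section final.
Context (R : realType) (d : nat) (U : set_system (prob R d)) (UU : UltraFilter U)
  (alpha : R) (P : prob R d) (a0 : 0 < alpha) (UT : U (trimming alpha P)).

Lemma sum_cvg (c : nat -> R) (B : nat -> set (Rd R d)) N :
  (forall k, measurable (B k)) ->
  (fun Q : prob R d => \sum_(k < N) c k * fine (Q (B k))) @ U -->
  \sum_(k < N) c k * lB U (B k).
Proof.
move=> mB; elim: N => [|N IH].
  under eq_fun do rewrite big_ord0.
  rewrite big_ord0; exact: cvg_cst.
under eq_fun do rewrite big_ord_recr.
rewrite big_ord_recr; apply: cvgD => //; apply: cvgM; first exact: cvg_cst.
exact: (gB_cvg UU (mB N)).1.
Qed.

Lemma weak_cvg (f : bcf R d) :
  (fun Q => weak_eval Q f) @ U --> weak_eval (mu_p UU a0 UT) f.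
Proof.
have [cf [M0 hM0]] := svalP f.
pose g : Rd R d -> R := sval f.
have mg : measurable_fun setT g := bcf_meas f.
set M := `|M0| + 1.
have fM x : `|g x| < M by apply: le_lt_trans (hM0 x) _; rewrite /M ltr_pwDr // ler_norm.
apply/cvgrPdist_le => e e0.
set n := (Num.truncn (3 / e)).+1.
have n0 : (0 < n)%N by [].
have hn3 : 3 * hn R n <= e.
  rewrite /hn ler_pdivrMr ?ltr0n // -ler_pdivrMl // mulrC.
  apply: ltW; exact: truncnS_gt.
have mB : forall k, measurable (BK g M n k) by move=> k; exact: BK_meas.
have cS := @sum_cvg (cK M n) (BK g M n) (NK M n) mB.
move/cvgrPdist_le: cS => /(_ (hn R n)) cS.
have hn0 : 0 < hn R n by rewrite /hn invr_gt0 ltr0n.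
apply: filterS (cS hn0) => Q HQ.
have Hmu := int_approx (mu_p UU a0 UT) mg fM n0.
have HQ' := int_approx Q mg fM n0.
have Smu : \sum_(k < NK M n) cK M n k * fine (mu_p UU a0 UT (BK g M n k))
    = \sum_(k < NK M n) cK M n k * lB U (BK g M n k).
  by apply: eq_bigr => k _; rewrite mu_p_fine.
rewrite Smu in Hmu.
rewrite /weak_eval -/(Rintegral _ _ _) -/(Rintegral _ _ _).
set Im := \int[mu_p UU a0 UT]_x sval f x.
set IQ := \int[Q]_x sval f x.
set Sm := \sum_(k < NK M n) cK M n k * lB U (BK g M n k).
set SQ := \sum_(k < NK M n) cK M n k * fine (Q (BK g M n k)).
have E1 : `|Im - Sm| <= hn R n by exact: Hmu.
have E2 : `|SQ - IQ| <= hn R n by rewrite distrC; exact: HQ'.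
have T1 := ler_distD Sm Im IQ.
have T2 := ler_distD SQ Sm IQ.
lra.
Qed.

End final.

Unset Implicit Arguments.
Theorem lemma3 (R : realType) (d : nat) (alpha : R) (P : prob R d) :
  0 < alpha <= 1 ->
  compact (trimming alpha P : set (weak_prob R d)).
Proof.
move=> /andP [a0 _]; rewrite compact_ultra => F UF FT.
exists (mu_p UF a0 FT); split; first exact: mu_p_trim.
apply: initial_cvg_back; apply: ptws_cvg_back => f.
exact: weak_cvg.
Qed.
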